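(* Let $F,G_1,\dots,G_n$ be pairwise disjoint always solvable graphs, let $u\in V(F)$ and $v_i\in V(G_i)$ for $1\le i\le n$, and let $H$ be the graph obtained from the disjoint union $F\cup G_1\cup\cdots\cup G_n$ by adding the edges $v_iu$ for $1\le i\le n$. If $\mathcal{A}_F(u)=0$, then $H$ is always solvable. If $\mathcal{A}_F(u)=1$, then $H$ is always solvable if and only if the number of indices $i$ with $\mathcal{A}_{G_i}(v_i)=1$ is even.
   Context: For a finite simple graph $G$ with vertex set $\{v_1,\dots,v_n\}$, the closed adjacency matrix $N(G)$ is the $n\times n$ matrix over $\mathbb{Z}_2$ whose $(i,j)$ entry is $1$ iff $i=j$ or $v_i$ is adjacent to $v_j$. $G$ is always solvable if $\operatorname{Ker}(N(G))=0$. Elements of $\operatorname{Ker}(N(G))$ are null patterns. A vertex $v$ is half-activated if $\boldsymbol{\ell}(v)=1$ for some null pattern $\boldsymbol{\ell}$; otherwise it is always-activated if $\mathbf{p}(v)=1$ for every $\mathbf{p}$ with $N(G)\mathbf{p}=\mathbf{1}$ (the all-ones vector), and never-activated if $\mathbf{p}(v)=0$ for every such $\mathbf{p}$. The activation number $\mathcal{A}_G(v)$ is $1$, $0$, $-1$ for always-, never-, half-activated respectively. *)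

(* Defs.v *)
From HB Require Import structures.
From mathcomp Require Import all_boot all_algebra.
Set Implicit Arguments. Unset Strict Implicit. Unset Printing Implicit Defensive.
Import GRing.Theory.
Local Open Scope ring_scope.

(* A finite simple graph is given by a vertex finType T and an adjacency
   relation adj (assumed symmetric and irreflexive where needed). *)

Definition closedN (T : finType) (adj : rel T) (p : {ffun T -> 'F_2}) :
  {ffun T -> 'F_2} :=
  [ffun v => \sum_(w | (w == v) || adj v w) p w].

Definition null_pattern (T : finType) (adj : rel T) (l : {ffun T -> 'F_2}) : bool :=
  closedN adj l == 0.

Definition always_solvable (T : finType) (adj : rel T) : Prop :=
  forall l : {ffun T -> 'F_2}, null_pattern adj l -> l = 0.

Definition half_activated (T : finType) (adj : rel T) (v : T) : bool :=
  [exists l : {ffun T -> 'F_2}, null_pattern adj l && (l v == 1)].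

Definition solution (T : finType) (adj : rel T) (p : {ffun T -> 'F_2}) : bool :=
  closedN adj p == [ffun=> 1].

Definition always_activated (T : finType) (adj : rel T) (v : T) : bool :=
  ~~ half_activated adj v &&
  [forall p : {ffun T -> 'F_2}, solution adj p ==> (p v == 1)].

Definition never_activated (T : finType) (adj : rel T) (v : T) : bool :=
  ~~ half_activated adj v &&
  [forall p : {ffun T -> 'F_2}, solution adj p ==> (p v == 0)].

(* activation number: 1, 0, -1 for always-, never-, half-activated.
   (Since N(G)p = 1 always has a solution, exactly one case occurs; the
   final junk value 2 is never reached.) *)
Definition activation (T : finType) (adj : rel T) (v : T) : int :=
  if half_activated adj v then -1
  else if always_activated adj v then 1
  else if never_activated adj v then 0
  else 2.

Definition Hadj (VF : finType) (adjF : rel VF) (n : nat) (VG : 'I_n -> finType)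
  (adjG : forall i, rel (VG i)) (u : VF) (v : forall i, VG i) :
  rel (VF + {i : 'I_n & VG i})%type :=
  fun x y =>
    match x, y with
    | inl a, inl b => adjF a b
    | inr s, inr t => (tag s == tag t) && adjG (tag s) (tagged s) (tagged_as s t)
    | inl a, inr t => (a == u) && (tagged t == v (tag t))
    | inr s, inl b => (b == u) && (tagged s == v (tag s))
    end.

(* Main.v *)
Require Import Defs.
From mathcomp Require Import all_boot all_algebra.
Set Implicit Arguments. Unset Strict Implicit. Unset Printing Implicit Defensive.
Import GRing.Theory.
Local Open Scope ring_scope.

Lemma F2_cases (a : 'F_2) : a = 0 \/ a = 1.
Proof. case: a => [[|[|m]] H]; [left|right|done]; exact/val_inj. Qed.

Lemma F2_add_self (a : 'F_2) : a + a = 0.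
Proof. case: (F2_cases a) => ->; first by rewrite addr0. exact/val_inj. Qed.

Lemma F2_eq (a b : 'F_2) : a + b = 0 -> a = b.
Proof.
move/eqP; rewrite addr_eq0 => /eqP ->; apply/eqP.
by rewrite eq_sym -addr_eq0 F2_add_self.
Qed.

Lemma F2_mul_self (a : 'F_2) : a * a = a.
Proof. by case: (F2_cases a) => ->; rewrite ?mulr0 ?mulr1. Qed.

Lemma F2_nat m : (m%:R : 'F_2) = (odd m)%:R.
Proof. by rewrite -Fp_nat_mod // modn2. Qed.

Section G.
Variables (T : finType) (adj : rel T).
Hypotheses (sym : symmetric adj) (irr : irreflexive adj).

Lemma closedND a b : closedN adj (a + b) = closedN adj a + closedN adj b.
Proof. by apply/ffunP => x; rewrite !ffunE -big_split; apply: eq_bigr => w _; rewrite ffunE. Qed.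

Lemma closedNB a b : closedN adj (a - b) = closedN adj a - closedN adj b.
Proof. by apply/ffunP => x; rewrite !ffunE -sumrB; apply: eq_bigr => w _; rewrite !ffunE. Qed.

Lemma closedN0 : closedN adj 0 = 0.
Proof. by apply/ffunP => x; rewrite !ffunE big1 // => w _; rewrite ffunE. Qed.

Hypothesis AS : always_solvable adj.

Lemma N_inj : injective (closedN adj).
Proof.
move=> a b H; apply/eqP; rewrite -subr_eq0; apply/eqP/AS.
by rewrite /null_pattern closedNB H subrr.
Qed.

Lemma N_onto y : exists x, closedN adj x = y.
Proof. by exists (invF N_inj y); rewrite f_invF. Qed.

Definition dot (x y : {ffun T -> 'F_2}) := \sum_w x w * y w.

Lemma dot_sym x y : dot (closedN adj x) y = dot x (closedN adj y).
Proof.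
rewrite /dot.
under eq_bigr => v _ do rewrite ffunE big_distrl /= big_mkcond /=.
rewrite exchange_big /=; apply eq_bigr => w _.
rewrite ffunE big_distrr /= [RHS]big_mkcond /=; apply: eq_bigr => v _.
by rewrite (sym v w) (eq_sym w v).
Qed.

Lemma dot_quad x : dot x (closedN adj x) = \sum_w x w.
Proof.
rewrite /dot.
have -> : \sum_w x w * closedN adj x w = \sum_w x w + \sum_v \sum_w (if adj v w then x v * x w else 0).
  rewrite -big_split /=; apply: eq_bigr => v _.
  rewrite ffunE (bigD1 v) /=; last by rewrite eqxx.
  rewrite mulrDr F2_mul_self; congr (_ + _).
  rewrite big_distrr /= big_mkcond /=; apply: eq_bigr => w _.
  case: (eqVneq w v) => [->|ne]; first by rewrite irr.
  by rewrite /= andbT.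
rewrite -[RHS]addr0; congr (_ + _).
set f := fun v w => if adj v w then x v * x w else 0.
rewrite -/(\sum_v \sum_w f v w).
set A := \sum_v \sum_w (if (enum_rank w < enum_rank v)%N then f v w else 0).
set B := \sum_v \sum_w (if (enum_rank v < enum_rank w)%N then f v w else 0).
have -> : \sum_v \sum_w f v w = A + B.
  rewrite /A /B -big_split /=; apply: eq_bigr => v _.
  rewrite -big_split /=; apply: eq_bigr => w _.
  case: (ltngtP (enum_rank w) (enum_rank v)) => //; rewrite ?addr0 ?add0r //.
  by move/val_inj/enum_rank_inj ->; rewrite /f irr.
have hBA : B = A.
  rewrite /A /B exchange_big /=; apply: eq_bigr => v _; apply: eq_bigr => w _.
  by rewrite /f sym mulrC.
by rewrite hBA F2_add_self.
Qed.

Definition ev (v : T) : {ffun T -> 'F_2} := [ffun w => (w == v)%:R].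

Lemma dot_ev x v : dot x (ev v) = x v.
Proof.
rewrite /dot (bigD1 v) //= big1 ?addr0; first by rewrite ffunE eqxx mulr1.
by move=> w /negbTE ne; rewrite ffunE ne mulr0.
Qed.

Lemma dot_sym' x y : dot x y = dot y x.
Proof. by rewrite /dot; apply: eq_bigr => w _; rewrite mulrC. Qed.

Lemma key q p v : closedN adj q = ev v -> solution adj p -> q v = p v.
Proof.
move=> Hq /eqP Hp.
rewrite -dot_ev -Hq dot_quad.
have -> : \sum_w q w = dot q [ffun=> 1].
  by apply: eq_bigr => w _; rewrite ffunE mulr1.
by rewrite -Hp -dot_sym Hq dot_sym' dot_ev.
Qed.

Lemma not_half v : half_activated adj v = false.
Proof.
apply/negbTE/existsP => -[l /andP[/AS -> ]]; by rewrite ffunE.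
Qed.

Lemma sol_ex : exists p, solution adj p.
Proof. by case: (N_onto [ffun=> 1]) => p Hp; exists p; apply/eqP. Qed.

Lemma activationE p v : solution adj p ->
  activation adj v = if p v == 1 then 1 else 0.
Proof.
move=> Hp; rewrite /activation /always_activated /never_activated not_half /=.
have U : forall p', solution adj p' -> p' = p.
  by move=> p' Hp'; apply: N_inj; rewrite (eqP Hp) (eqP Hp').
have -> : [forall p0, solution adj p0 ==> (p0 v == 1)] = (p v == 1).
  apply/forallP/idP => [/(_ p)|H p']; first by rewrite Hp.
  by apply/implyP => /U ->.
case: ifP => // H1.
have -> : [forall p0, solution adj p0 ==> (p0 v == 0)] = true.
  apply/forallP => p'; apply/implyP => /U ->.
  by case: (F2_cases (p v)) H1 => -> //; rewrite eqxx.
by [].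
Qed.

End G.

Section H.
Variables (VF : finType) (adjF : rel VF) (n : nat)
  (VG : 'I_n -> finType) (adjG : forall i, rel (VG i))
  (u : VF) (v : forall i, VG i).

Let X := (VF + {i : 'I_n & VG i})%type.
Let HA := Hadj adjF adjG u v.
Definition mkT i (x : VG i) : {i : 'I_n & VG i} := Tagged (fun i => VG i) x.

Definition lF (l : {ffun X -> 'F_2}) : {ffun VF -> 'F_2} := [ffun w => l (inl w)].
Definition lG (l : {ffun X -> 'F_2}) i : {ffun VG i -> 'F_2} := [ffun x => l (inr (mkT x))].

Arguments lG l i : clear implicits.

Lemma sig_sum (P : pred {i : 'I_n & VG i}) (F : {i : 'I_n & VG i} -> 'F_2) :
  \sum_(t | P t) F t = \sum_j \sum_(y : VG j | P (mkT y)) F (mkT y).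
Proof.
rewrite (@sig_big_dep _ _ _ _ (fun j => VG j) predT (fun j y => P (mkT y)) (fun j y => F (mkT y))).
by apply: eq_big => -[j y].
Qed.

Lemma HN_inl l w : closedN HA l (inl w) =
  closedN adjF (lF l) w + (if w == u then \sum_i lG l i (v i) else 0).
Proof.
rewrite !ffunE big_sumType /=; congr (_ + _).
  by apply: eq_bigr => b _; rewrite ffunE.
case: (eqVneq w u) => [E|ne]; first subst w; last by rewrite big_pred0 // => t; rewrite (negbTE ne).
rewrite sig_sum; apply: eq_bigr => i _.
rewrite /= (big_pred1 (v i)) ?ffunE // => y; rewrite /=.
Qed.

Lemma HN_inr l (i : 'I_n) (x : VG i) : closedN HA l (inr (mkT x)) =
  closedN (@adjG i) (lG l i) x + (if x == v i then l (inl u) else 0).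
Proof.
rewrite !ffunE big_sumType /= addrC; congr (_ + _); last first.
  case: (eqVneq x (v i)) => [E|ne]; last by rewrite big_pred0 // => b; rewrite andbF.
  rewrite (big_pred1 u) // => b; by rewrite andbT.
rewrite sig_sum (bigD1 i) //= [X in _ + X]big1 ?addr0.
  apply: eq_big => y; last by rewrite ffunE.
  have -> : (inr (mkT y) == inr (mkT x) :> X) = (y == x).
    by rewrite (inj_eq (@inr_inj _ _)) /mkT eq_Tagged.
  by rewrite eqxx tagged_asE.
move=> j ne; rewrite big_pred0 // => y.
have -> : (inr (mkT y) == inr (mkT x) :> X) = false.
  rewrite (inj_eq (@inr_inj _ _)); apply/negbTE; apply: contra ne => /eqP E.
  by rewrite -[j]/(tag (mkT y)) E.
by rewrite eq_sym (negbTE ne).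
Qed.
End H.

Unset Implicit Arguments.
Section M.
Variables (VF : finType) (adjF : rel VF) (n : nat)
  (VG : 'I_n -> finType) (adjG : forall i, rel (VG i))
  (u : VF) (v : forall i, VG i).
Hypotheses (symF : symmetric adjF) (irrF : irreflexive adjF)
  (symG : forall i, symmetric (adjG i)) (irrG : forall i, irreflexive (adjG i))
  (ASF : always_solvable adjF) (ASG : forall i, always_solvable (adjG i)).

Let X := (VF + {i : 'I_n & VG i})%type.
Let HA := Hadj adjF adjG u v.

Definition qF := invF (N_inj ASF) (ev u).
Definition pF := invF (N_inj ASF) [ffun=> 1].
Definition qG i := invF (N_inj (ASG i)) (ev (v i)).
Definition pG i := invF (N_inj (ASG i)) [ffun=> 1].

Lemma qFE : closedN adjF qF = ev u. Proof. exact: f_invF. Qed.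
Lemma qGE i : closedN (adjG i) (qG i) = ev (v i). Proof. exact: f_invF. Qed.
Lemma pFs : solution adjF pF. Proof. exact/eqP/f_invF. Qed.
Lemma pGs i : solution (adjG i) (pG i). Proof. exact/eqP/f_invF. Qed.

Lemma qFu : qF u = pF u. Proof. exact: (@key _ _ symF irrF qF pF u qFE pFs). Qed.
Lemma qGv i : qG i (v i) = pG i (v i). Proof. exact: (@key _ _ (symG i) (irrG i) (qG i) (pG i) (v i) (qGE i) (pGs i)). Qed.

Definition c : 'F_2 := \sum_i qG i (v i).

Lemma cE : c = (#|[set i | pG i (v i) == 1]|)%:R.
Proof.
rewrite /c (bigID (fun i => pG i (v i) == 1)) /= [X in _ + X]big1 ?addr0.
  rewrite -sumr_const; apply: eq_big => i; first by rewrite inE.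
  by move=> /eqP <-; rewrite qGv.
by move=> i H; rewrite qGv; case: (F2_cases (pG i (v i))) H => -> //; rewrite eqxx.
Qed.

Lemma fwd : ~ (pF u = 1 /\ c = 1) -> always_solvable HA.
Proof.
move=> Hn l /eqP Hl.
have HL w : closedN adjF (lF l) w + (if w == u then \sum_i lG l i (v i) else 0) = 0.
  by rewrite -(@HN_inl _ adjF _ _ adjG u v l w) Hl ffunE.
have HR i x : closedN (adjG i) (lG l i) x + (if x == v i then l (inl u) else 0) = 0.
  by rewrite -(@HN_inr _ adjF _ _ adjG u v l i x) Hl ffunE.
have lFu : lF l u = l (inl u) by rewrite ffunE.
case: (F2_cases (l (inl u))) => Ha.
- have G0 i : lG l i = 0.
    apply: ASG; apply/eqP/ffunP => x; have := HR i x.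
    by rewrite Ha if_same addr0 => ->; rewrite ffunE.
  have F0 : lF l = 0.
    apply: ASF; apply/eqP/ffunP => w; have := HL w.
    rewrite big1 ?if_same ?addr0 => [->|i _]; first by rewrite ffunE.
    by rewrite G0 ffunE.
  apply/ffunP => -[w|[i x]]; rewrite ffunE.
    by have := F0; move/ffunP/(_ w); rewrite !ffunE.
  by have := G0 i; move/ffunP/(_ x); rewrite !ffunE.
- exfalso.
  have Gq i : lG l i = qG i.
    apply: (N_inj (ASG i)); rewrite qGE; apply/ffunP => x.
    have := HR i x; rewrite Ha !ffunE.
    by case: (x == v i); rewrite ?addr0 //; move/F2_eq.
  have Sc : \sum_i lG l i (v i) = c by apply: eq_bigr => i _; rewrite Gq.
  case: (F2_cases c) => Hc.
  + have : lF l = 0.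
      apply: ASF; apply/eqP/ffunP => w; have := HL w.
      by rewrite Sc Hc if_same addr0 => ->; rewrite ffunE.
    by move/ffunP/(_ u); rewrite lFu Ha ffunE.
  + have : lF l = qF.
      apply: (N_inj ASF); rewrite qFE; apply/ffunP => w.
      have := HL w; rewrite Sc Hc !ffunE.
      by case: (w == u); rewrite ?addr0 //; move/F2_eq.
    move/ffunP/(_ u); rewrite lFu Ha qFu => H1; apply: Hn; split => //.
Qed.

Lemma bwd : pF u = 1 -> c = 1 -> ~ always_solvable HA.
Proof.
move=> HpF Hc AS.
pose l : {ffun X -> 'F_2} :=
  [ffun z => match z with inl w => qF w | inr t => qG (tag t) (tagged t) end].
have Hnull : null_pattern HA l.
  apply/eqP/ffunP => -[w|[i x]].
  - rewrite (@HN_inl _ adjF _ _ adjG u v l w).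
    have -> : lF l = qF by apply/ffunP => w'; rewrite !ffunE.
    have -> : \sum_i lG l i (v i) = c by apply: eq_bigr => i _; rewrite !ffunE.
    rewrite qFE Hc !ffunE; case: (w == u) => /=; rewrite ?mulr1n ?mulr0n ?addr0 ?F2_add_self //.
  - rewrite -[existT _ i x]/(mkT x) (@HN_inr _ adjF _ _ adjG u v l i x).
    have -> : lG l i = qG i by apply/ffunP => x'; rewrite !ffunE.
    rewrite qGE !ffunE qFu HpF; case: (x == v i) => /=; rewrite ?mulr1n ?mulr0n ?addr0 ?F2_add_self //.
have := AS l Hnull; move/ffunP/(_ (inl u)); rewrite !ffunE qFu HpF.
by move/eqP.
Qed.

Lemma main_sec : (activation adjF u = 0 -> always_solvable HA) /\
  (activation adjF u = 1 -> (always_solvable HA <->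
      ~~ odd #|[set i : 'I_n | activation (adjG i) (v i) == 1]|)).
Proof.
have AF := @activationE _ _ ASF pF u pFs.
have S : [set i | activation (adjG i) (v i) == 1] = [set i | pG i (v i) == 1].
  apply/setP => i; rewrite !inE (@activationE _ _ (ASG i) (pG i) (v i) (pGs i)).
  by case: ifP.
rewrite S; split => [A0|A1].
  by apply: fwd => -[H _]; move: A0; rewrite AF H eqxx => /eqP.
have H1 : pF u = 1.
  by move: A1; rewrite AF; case: eqP => // _ /eqP.
split.
  move=> AS; apply/negP => Hodd; apply: (bwd H1 _ AS).
  by rewrite cE F2_nat Hodd.
move=> Hev; apply: fwd => -[_ Hc]; move: Hc; rewrite cE F2_nat (negbTE Hev) /=.
by move=> /esym/eqP; rewrite oner_eq0.
Qed.
End M.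

Theorem corollary3p4 (VF : finType) (adjF : rel VF) (n : nat)
  (VG : 'I_n -> finType) (adjG : forall i, rel (VG i))
  (u : VF) (v : forall i, VG i) :
  symmetric adjF -> irreflexive adjF ->
  (forall i, symmetric (adjG i)) -> (forall i, irreflexive (adjG i)) ->
  always_solvable adjF -> (forall i, always_solvable (adjG i)) ->
  (activation adjF u = 0 -> always_solvable (Hadj adjF adjG u v)) /\
  (activation adjF u = 1 ->
     (always_solvable (Hadj adjF adjG u v) <->
      ~~ odd #|[set i : 'I_n | activation (adjG i) (v i) == 1]|)).
Proof.
move=> sF iF sG iG aF aG.
exact: (@main_sec VF adjF n VG adjG u v sF iF sG iG aF aG).
Qed.
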